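(* Let $N\ge 1$ be the number of users, indexed $1,\dots,N$. For each user $i$ let $\mathbf{x}_i$ be an observed feature vector and let $\phi(\mathbf{x}_i,\ell)\in\mathbb{R}$ be given for $\ell\in\{0,1\}$. For each pair $i<j$ let $\mathbf{z}_{i,j}$ be an observed relationship vector (write $\mathbf{z}_{j,i}=\mathbf{z}_{i,j}$) and let $\psi(\mathbf{z}_{i,j},a,b)\in\mathbb{R}$ be given for $a,b\in\{0,1\}$, where $a$ refers to user $i$ and $b$ to user $j$. Assume: (i) if there is no observed relationship between users $i$ and $j$, then $\psi(\mathbf{z}_{i,j},a,b)=0$ for all $a,b\in\{0,1\}$; (ii) for every pair $i<j$, $\psi(\mathbf{z}_{i,j},1,1)=0\le \psi(\mathbf{z}_{i,j},0,0)\le \psi(\mathbf{z}_{i,j},0,1)$ and $\psi(\mathbf{z}_{i,j},0,0)\le \psi(\mathbf{z}_{i,j},1,0)$. Consider the optimization problem $$\min_{\mathbf{L}\in\{0,1\}^N}\ E(\mathbf{L}),\qquad E(\mathbf{L})=\sum_{i=1}^N\phi(\mathbf{x}_i,\ell_i)+\sum_{i<j}\psi(\mathbf{z}_{i,j},\ell_i,\ell_j).$$ Define the Energy Graph as the directed graph with node set $\{s,t,u_1,\dots,u_N\}$ and edges with capacities: - for each $i$, an edge $(u_i,t)$ with capacity $\phi(\mathbf{x}_i,1)$; - for each $i$, an edge $(s,u_i)$ with capacity $\phi(\mathbf{x}_i,0)+\tfrac12\sum_{j\ne i}\psi(\mathbf{z}_{i,j},0,0)$; - for each pair $i<j$ with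 an observed relationship, edges $(u_i,u_j)$ with capacity $\psi(\mathbf{z}_{i,j},1,0)-\tfrac12\psi(\mathbf{z}_{i,j},0,0)$ and $(u_j,u_i)$ with capacity $\psi(\mathbf{z}_{i,j},0,1)-\tfrac12\psi(\mathbf{z}_{i,j},0,0)$. Then the optimal solutions of the optimization problem correspond exactly to minimum capacity $s$-$t$ cuts of the Energy Graph: if $(S,T)$ is a minimum capacity $s$-$t$ cut and $\mathbf{L}^\star$ is defined by $\ell^\star_i=1$ if $u_i\in S$ and $\ell^\star_i=0$ if $u_i\in T$, then $\mathbf{L}^\star$ minimizes $E$, and the minimum value of $E$ equals the minimum cut capacity.
   Context: This models classification of social media users as in a target location ($\ell_i=1$) or not ($\ell_i=0$); $\phi$ is the ''profile energy'' and $\psi$ the ''link energy''. An $s$-$t$ cut is a partition of the node set into $S\ni s$ and $T\ni t$; its capacity is the sum of capacities of all edges directed from a node of $S$ to a node of $T$. *)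

(* Defs.v *)
From HB Require Import structures.
From mathcomp Require Import all_boot all_order all_algebra.
Set Implicit Arguments. Unset Strict Implicit. Unset Printing Implicit Defensive.
Import Order.TTheory GRing.Theory Num.Theory.
Local Open Scope ring_scope.

(* Labels l in {0,1} are encoded as bool: true = 1 (in target location), false = 0.
   Nodes of the Energy Graph: inl true = s, inl false = t, inr i = u_i. *)
Definition node (N : nat) : finType := (bool + 'I_N)%type.
Definition src_node {N : nat} : node N := inl true.
Definition snk_node {N : nat} : node N := inl false.
Definition unode {N : nat} (i : 'I_N) : node N := inr i.

Section Energy.
Variables (R : realFieldType) (N : nat) (X Z : Type).
Variables (x : 'I_N -> X) (phi : X -> bool -> R).
Variables (z : 'I_N -> 'I_N -> Z) (psi : Z -> bool -> bool -> R).
Variable (obs : 'I_N -> 'I_N -> bool).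

Definition energy (L : 'I_N -> bool) : R :=
  \sum_(i < N) phi (x i) (L i)
  + \sum_(i < N) \sum_(j < N | (i < j)%N) psi (z i j) (L i) (L j).

Definition pair_edges (i j : 'I_N) : seq (node N * node N * R) :=
  [:: (unode i, unode j, psi (z i j) true false - 2^-1 * psi (z i j) false false);
      (unode j, unode i, psi (z i j) false true - 2^-1 * psi (z i j) false false)].

(* Directed edges (tail, head, capacity) of the Energy Graph (a list, as multigraph). *)
Definition energy_graph : seq (node N * node N * R) :=
  [seq (unode i, snk_node, phi (x i) true) | i <- enum 'I_N]
  ++ [seq (src_node, unode i,
           phi (x i) false + 2^-1 * \sum_(j < N | j != i) psi (z i j) false false)
     | i <- enum 'I_N]
  ++ flatten [seq pair_edges ij.1 ij.2
             | ij : ('I_N * 'I_N)%type <- enum [pred ij : ('I_N * 'I_N)%type | (ij.1 < ij.2)%N && obs ij.1 ij.2]].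
End Energy.

Definition is_st_cut (N : nat) (S : {set node N}) : Prop :=
  src_node \in S /\ snk_node \notin S.

Definition cut_capacity (R : realFieldType) (N : nat)
  (G : seq (node N * node N * R)) (S : {set node N}) : R :=
  \sum_(e <- G | (e.1.1 \in S) && (e.1.2 \notin S)) e.2.

Definition is_min_st_cut (R : realFieldType) (N : nat)
  (G : seq (node N * node N * R)) (S : {set node N}) : Prop :=
  is_st_cut S /\
  forall S' : {set node N}, is_st_cut S' -> cut_capacity G S <= cut_capacity G S'.

(* Main.v *)
Require Import Defs.
From HB Require Import structures.
From mathcomp Require Import all_boot all_order all_algebra.
From mathcomp Require Import ring lra.
Import Order.TTheory GRing.Theory Num.Theory.
Local Open Scope ring_scope.

Lemma swap_lt (R : realFieldType) (N : nat) (F : 'I_N -> 'I_N -> R) :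
  \sum_(i < N) \sum_(j < N | (j < i)%N) F i j = \sum_(i < N) \sum_(j < N | (i < j)%N) F j i.
Proof.
rewrite (exchange_big_dep xpredT) //=.
Qed.

Section S.
Variables (R : realFieldType) (N : nat) (X Z : Type)
  (x : 'I_N -> X) (phi : X -> bool -> R)
  (z : 'I_N -> 'I_N -> Z) (psi : Z -> bool -> bool -> R)
  (obs : 'I_N -> 'I_N -> bool)
  (Hzsym : forall i j : 'I_N, z j i = z i j)
  (Hnoobs : forall i j : 'I_N, (i < j)%N -> ~~ obs i j ->
     forall a b : bool, psi (z i j) a b = 0)
  (Hpsi : forall i j : 'I_N, (i < j)%N ->
     [/\ psi (z i j) true true = 0,
         0 <= psi (z i j) false false,
         psi (z i j) false false <= psi (z i j) false true
       & psi (z i j) false false <= psi (z i j) true false]).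

Lemma cap_eq (S : {set node N}) : is_st_cut S ->
  cut_capacity (energy_graph x phi z psi obs) S = energy x phi z psi (fun i => unode i \in S).
Proof.
case=> hs ht.
set L := fun i => unode i \in S.
rewrite /cut_capacity /energy_graph !big_cat.
have E1 : \sum_(e <- [seq (unode i, snk_node, phi (x i) true) | i <- enum 'I_N] |
            (e.1.1 \in S) && (e.1.2 \notin S)) e.2
          = \sum_(i < N) (if L i then phi (x i) true else 0).
  rewrite big_map big_mkcond enumT /=.
  by apply: eq_bigr => i _; rewrite ht andbT.
have E2 : \sum_(e <- [seq (src_node, unode i,
           phi (x i) false + 2^-1 * \sum_(j < N | j != i) psi (z i j) false false)
     | i <- enum 'I_N] | (e.1.1 \in S) && (e.1.2 \notin S)) e.2
     = \sum_(i < N) (if ~~ L i then phi (x i) false else 0)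
       + \sum_(i < N) \sum_(j < N | (i < j)%N) (if ~~ L i then 2^-1 * psi (z i j) false false else 0)
       + \sum_(i < N) \sum_(j < N | (i < j)%N) (if ~~ L j then 2^-1 * psi (z i j) false false else 0).
  rewrite big_map big_mkcond enumT /= -(@swap_lt R N (fun a b => if ~~ L a then 2^-1 * psi (z b a) false false else 0)) -addrA -!big_split /=.
  apply: eq_bigr => i _; rewrite hs /=.
  have -> : \sum_(j < N | j != i) psi (z i j) false false =
     \sum_(j < N | (i < j)%N) psi (z i j) false false + \sum_(j < N | (j < i)%N) psi (z i j) false false.
    rewrite (bigID (fun j : 'I_N => (i < j)%N)) /=; congr (_ + _); apply: eq_bigl => j.
      by rewrite -(inj_eq val_inj) /= eq_sym; case: ltngtP.
    by rewrite -(inj_eq val_inj) /= eq_sym; case: ltngtP.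
  rewrite /L; case: (unode i \in S) => /=.
    by rewrite !big1 ?addr0.
  rewrite mulrDr; congr (_ + (_ + _)); rewrite mulr_sumr; apply: eq_bigr => j _ //.
  by rewrite Hzsym.
have E3 : \sum_(e <- flatten [seq pair_edges z psi ij.1 ij.2
             | ij : ('I_N * 'I_N)%type <- enum [pred ij : ('I_N * 'I_N)%type | (ij.1 < ij.2)%N && obs ij.1 ij.2]]
          | (e.1.1 \in S) && (e.1.2 \notin S)) e.2
   = \sum_(i < N) \sum_(j < N | (i < j)%N)
       ((if L i && ~~ L j then psi (z i j) true false - 2^-1 * psi (z i j) false false else 0)
      + (if L j && ~~ L i then psi (z i j) false true - 2^-1 * psi (z i j) false false else 0)).
  transitivity (\sum_(i < N) \sum_(j < N | (i < j)%N && obs i j)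
       ((if L i && ~~ L j then psi (z i j) true false - 2^-1 * psi (z i j) false false else 0)
      + (if L j && ~~ L i then psi (z i j) false true - 2^-1 * psi (z i j) false false else 0))).
    rewrite big_flatten big_map big_enum pair_big_dep /=.
    apply: eq_big => [ij|ij _]; first by rewrite inE.
    by rewrite /pair_edges !big_cons big_nil /= /L; case: (unode ij.1 \in S); case: (unode ij.2 \in S); rewrite /= ?addr0 ?add0r.
  apply: eq_bigr => i _; rewrite [RHS](bigID (obs i)) /= [X in _ = _ + X]big1 ?addr0 //.
  move=> j /andP[hij hno]; rewrite !Hnoobs //.
  by rewrite mulr0 subr0 !if_same addr0.
rewrite E1 E2 E3 /energy.
have -> : \sum_(i < N) phi (x i) (L i) = \sum_(i < N) (if L i then phi (x i) true else 0)
   + \sum_(i < N) (if ~~ L i then phi (x i) false else 0).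
  by rewrite -big_split; apply: eq_bigr => i _; case: (L i); rewrite /= ?addr0 ?add0r.
have -> : \sum_(i < N) \sum_(j < N | (i < j)%N) psi (z i j) (L i) (L j) =
   \sum_(i < N) \sum_(j < N | (i < j)%N)
          (if ~~ L i then 2^-1 * psi (z i j) false false else 0) +
   \sum_(i < N) \sum_(j < N | (i < j)%N)
          (if ~~ L j then 2^-1 * psi (z i j) false false else 0) +
   \sum_(i < N) \sum_(j < N | (i < j)%N)
              ((if L i && ~~ L j
                then psi (z i j) true false - 2^-1 * psi (z i j) false false
                else 0) +
               (if L j && ~~ L i
                then psi (z i j) false true - 2^-1 * psi (z i j) false false
                else 0)).
  rewrite -!big_split /=; apply: eq_bigr => i _; rewrite -!big_split /=; apply: eq_bigr => j hij.
  have [h11 _ _ _] := Hpsi i j hij.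
  by case: (L i); case: (L j); rewrite /= ?h11 ?addr0 ?add0r ?mulr0; field.
rewrite /=; set A := \sum_(i < N) (if L i then _ else _).
set B := \sum_(i < N) (if ~~ L i then _ else _).
set C := \sum_(i < N) \sum_(j < N | _) (if ~~ L i then _ else _).
set D := \sum_(i < N) \sum_(j < N | _) (if ~~ L j then _ else _).
set P := \sum_(i < N) \sum_(j < N | _) (_ + _).
by rewrite !addrA.
Qed.
End S.

Theorem theorem1 (R : realFieldType) (N : nat) (X Z : Type)
  (x : 'I_N -> X) (phi : X -> bool -> R)
  (z : 'I_N -> 'I_N -> Z) (psi : Z -> bool -> bool -> R)
  (obs : 'I_N -> 'I_N -> bool)
  (HN : (1 <= N)%N)
  (Hzsym : forall i j : 'I_N, z j i = z i j)
  (Hnoobs : forall i j : 'I_N, (i < j)%N -> ~~ obs i j ->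
     forall a b : bool, psi (z i j) a b = 0)
  (Hpsi : forall i j : 'I_N, (i < j)%N ->
     [/\ psi (z i j) true true = 0,
         0 <= psi (z i j) false false,
         psi (z i j) false false <= psi (z i j) false true
       & psi (z i j) false false <= psi (z i j) true false])
  (S : {set node N}) :
  is_min_st_cut (energy_graph x phi z psi obs) S ->
  let Lstar := fun i : 'I_N => unode i \in S in
  (forall L : 'I_N -> bool, energy x phi z psi Lstar <= energy x phi z psi L) /\
  energy x phi z psi Lstar = cut_capacity (energy_graph x phi z psi obs) S.
Proof.
move=> [hcut hmin] Lstar.
have cap := @cap_eq R N X Z x phi z psi obs Hzsym Hnoobs Hpsi.
split; last by rewrite cap.
move=> L.
pose SL : {set node N} := [set v | match v with inl b => b | inr i => L i end].
have hSL : is_st_cut SL by split; rewrite inE.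
have hL : forall i, (unode i \in SL) = L i by move=> i; rewrite inE.
have -> : energy x phi z psi L = energy x phi z psi (fun i => unode i \in SL).
  rewrite /energy; congr (_ + _); apply: eq_bigr => i _; rewrite ?hL //.
  by apply: eq_bigr => j _; rewrite !hL.
by rewrite /Lstar -cap // -cap //; apply: hmin.
Qed.
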